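(* Fix $\mu\in(0,1)$, $j\in\{2,3\}$, $T^*>0$ and relatively prime positive integers $a,b$ with $aT^*=b\pi$. Let $\mathbf{X}^*=(x^*,y^*,z^*,x^{*\prime},y^{*\prime},z^{*\prime})$ be a $T^*$-periodic function $\mathbb{R}\to\mathbb{R}^6$, with $\mathbf{r}^*=(x^*,y^*,z^* )$ of class $C^1$ avoiding $(-\mu,0,0)$ and $(1-\mu,0,0)$. Let $s\in\mathbb{R}$ satisfy the half-period symmetry conditions: for all $\tau\in[0,T^*/2]$, $$x^*(s+T^*-\tau)=x^*(s+\tau),\quad x^{*\prime}(s+T^*-\tau)=-x^{*\prime}(s+\tau),$$ $$y^*(s+T^*-\tau)=-y^*(s+\tau),\quad y^{*\prime}(s+T^*-\tau)=y^{*\prime}(s+\tau),$$ $$z^*(s+T^*-\tau)\,z^{*\prime}(s+T^*-\tau)=-z^*(s+\tau)\,z^{*\prime}(s+\tau).$$ Let $\mathcal{M}(s,\tau_0)=\int_0^{aT^*}\mathbf{h}_j(\mathbf{X}^*(s+\tau),\tau_0+\tau)\cdot\mathbf{r}^{*\prime}(s+\tau)\,d\tau$. Then for every $\tau_0\in\mathbb{R}$, $$\mathcal{M}(s,\tau_0)=2AB,\qquad A=\begin{cases}\sin(2\tau_0),& a=1,\\ 0,&a>1,\end{cases}$$ $$B=\int_0^{T^*/2}\Big(K_j\big(\mathbf{X}^*(s+\tau)\big)\cos(2\tau)-J_j\big(\mathbf{X}^*(s+\tau)\big)\sin(2\tau)\Big)\,d\tau.$$ In particular, if $a>1$ then $\mathcal{M}(s',\tau_0)=0$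 for all $s',\tau_0$, and if $a=1$ then $\mathcal{M}(s,\tau_0)=0$ whenever $\tau_0\in\frac{\pi}{2}\mathbb{Z}$.
   Context: For $\mathbf{r}=(x,y,z)$ write $\mathbf{R}_{1-\mu}=(x+\mu,y,z)$, $\mathbf{R}_\mu=(x-1+\mu,y,z)$, $R_{1-\mu}=|\mathbf{R}_{1-\mu}|$, $R_\mu=|\mathbf{R}_\mu|$, and $P(\mathbf{r})=\big(\frac{1-\mu}{R_{1-\mu}^3}-\frac{\mu}{R_\mu^3}\big)I_3-\frac{3}{R_{1-\mu}^5}\mathbf{R}_{1-\mu}\mathbf{R}_{1-\mu}^T+\frac{3}{R_\mu^5}\mathbf{R}_\mu\mathbf{R}_\mu^T$. For $\mathbf{X}=(\mathbf{r},\mathbf{r}')$, $\mathbf{r}'=(x',y',z')$: $\mathbf{h}_2(\mathbf{X},\alpha)=-\frac32\begin{bmatrix}-\cos2\alpha&\sin2\alpha&0\\ \sin2\alpha&\cos2\alpha&0\\0&0&2/3\end{bmatrix}\mathbf{r}-\frac18(1-\mu)\mu P(\mathbf{r})(-8\cos2\alpha,11\sin2\alpha,0)^T$, and $\mathbf{h}_3(\mathbf{X},\alpha)=-\frac1{12}(1-\mu)\mu P(\mathbf{r})(-38\cos2\alpha,59\sin2\alpha,0)^T$. With $\mathbf{e}_1=(1,0,0)^T$, $\mathbf{e}_2=(0,1,0)^T$, define $J_2(\mathbf{X})=\tfrac32(xx'-yy')+(1-\mu)\mu\,(P(\mathbf{r})\mathbf{e}_1)\cdot\mathbf{r}'$,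 $K_2(\mathbf{X})=-\tfrac32(yx'+xy')-\tfrac{11}{8}(1-\mu)\mu\,(P(\mathbf{r})\mathbf{e}_2)\cdot\mathbf{r}'$, $J_3(\mathbf{X})=\tfrac{38}{12}(1-\mu)\mu\,(P(\mathbf{r})\mathbf{e}_1)\cdot\mathbf{r}'$, $K_3(\mathbf{X})=-\tfrac{59}{12}(1-\mu)\mu\,(P(\mathbf{r})\mathbf{e}_2)\cdot\mathbf{r}'$, so that $\mathbf{h}_2(\mathbf{X},\alpha)\cdot\mathbf{r}'=J_2\cos2\alpha+K_2\sin2\alpha-zz'$ and $\mathbf{h}_3(\mathbf{X},\alpha)\cdot\mathbf{r}'=J_3\cos2\alpha+K_3\sin2\alpha$. These are the leading-order Melnikov perturbation terms of the Hill Restricted 4-Body Problem (forcing period $\pi$). *)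

(* Defs.v *)
From Stdlib Require Import Reals Lra.
From Coquelicot Require Import Coquelicot.
Open Scope R_scope.

Definition vec3 : Type := (R * R * R)%type.
Definition v3 (a b c : R) : vec3 := (a, b, c).
Definition vx (v : vec3) : R := fst (fst v).
Definition vy (v : vec3) : R := snd (fst v).
Definition vz (v : vec3) : R := snd v.
Definition dot3 (u v : vec3) : R := vx u * vx v + vy u * vy v + vz u * vz v.
Definition add3 (u v : vec3) : vec3 := v3 (vx u + vx v) (vy u + vy v) (vz u + vz v).
Definition scal3 (k : R) (v : vec3) : vec3 := v3 (k * vx v) (k * vy v) (k * vz v).
Definition norm3 (v : vec3) : R := sqrt (dot3 v v).

Definition Rbig1 (mu : R) (r : vec3) : vec3 := v3 (vx r + mu) (vy r) (vz r).
Definition Rbigmu (mu : R) (r : vec3) : vec3 := v3 (vx r - 1 + mu) (vy r) (vz r).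

Definition Pmat (mu : R) (r : vec3) (v : vec3) : vec3 :=
  let R1 := Rbig1 mu r in
  let Rm := Rbigmu mu r in
  let n1 := norm3 R1 in
  let nm := norm3 Rm in
  add3 (scal3 ((1 - mu) / n1 ^ 3 - mu / nm ^ 3) v)
    (add3 (scal3 (- (3 / n1 ^ 5) * dot3 R1 v) R1)
          (scal3 ((3 / nm ^ 5) * dot3 Rm v) Rm)).

Definition Mrot (al : R) (r : vec3) : vec3 :=
  v3 (- cos (2 * al) * vx r + sin (2 * al) * vy r)
     (sin (2 * al) * vx r + cos (2 * al) * vy r)
     (2 / 3 * vz r).

(* A state X = (r, r') *)
Definition state : Type := (vec3 * vec3)%type.

Definition h2 (mu : R) (X : state) (al : R) : vec3 :=
  add3 (scal3 (- (3 / 2)) (Mrot al (fst X)))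
       (scal3 (- (1 / 8) * (1 - mu) * mu)
              (Pmat mu (fst X) (v3 (-8 * cos (2 * al)) (11 * sin (2 * al)) 0))).

Definition h3 (mu : R) (X : state) (al : R) : vec3 :=
  scal3 (- (1 / 12) * (1 - mu) * mu)
        (Pmat mu (fst X) (v3 (-38 * cos (2 * al)) (59 * sin (2 * al)) 0)).

Definition e1 : vec3 := v3 1 0 0.
Definition e2 : vec3 := v3 0 1 0.

Definition J2 (mu : R) (X : state) : R :=
  let r := fst X in let r' := snd X in
  3 / 2 * (vx r * vx r' - vy r * vy r') + (1 - mu) * mu * dot3 (Pmat mu r e1) r'.
Definition K2 (mu : R) (X : state) : R :=
  let r := fst X in let r' := snd X in
  - (3 / 2) * (vy r * vx r' + vx r * vy r') - 11 / 8 * (1 - mu) * mu * dot3 (Pmat mu r e2) r'.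
Definition J3 (mu : R) (X : state) : R :=
  38 / 12 * (1 - mu) * mu * dot3 (Pmat mu (fst X) e1) (snd X).
Definition K3 (mu : R) (X : state) : R :=
  - (59 / 12) * (1 - mu) * mu * dot3 (Pmat mu (fst X) e2) (snd X).

(* index j in {2,3}: j = 2 selects h2/J2/K2, otherwise (j = 3) h3/J3/K3 *)
Definition hj (j : nat) (mu : R) (X : state) (al : R) : vec3 :=
  if Nat.eqb j 2 then h2 mu X al else h3 mu X al.
Definition Jj (j : nat) (mu : R) (X : state) : R :=
  if Nat.eqb j 2 then J2 mu X else J3 mu X.
Definition Kj (j : nat) (mu : R) (X : state) : R :=
  if Nat.eqb j 2 then K2 mu X else K3 mu X.

Definition Xstar (x y z xp yp zp : R -> R) (t : R) : state :=
  (v3 (x t) (y t) (z t), v3 (xp t) (yp t) (zp t)).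

Definition Melnikov (j : nat) (mu : R) (x y z xp yp zp : R -> R) (a : nat) (T : R)
    (s tau0 : R) : R :=
  RInt (fun tau => dot3 (hj j mu (Xstar x y z xp yp zp (s + tau)) (tau0 + tau))
                        (v3 (xp (s + tau)) (yp (s + tau)) (zp (s + tau))))
       0 (INR a * T).

(* Main.v *)
Require Import Defs.
From Stdlib Require Import Reals Lra Lia ZArith.
From Coquelicot Require Import Coquelicot.
Open Scope R_scope.


Lemma c_plus (f g : R -> R) t : continuous f t -> continuous g t -> continuous (fun u => f u + g u) t.
Proof. intros; now apply (continuous_plus f g). Qed.
Lemma c_mult (f g : R -> R) t : continuous f t -> continuous g t -> continuous (fun u => f u * g u) t.
Proof. intros; now apply (continuous_mult f g). Qed.
Lemma c_opp (f : R -> R) t : continuous f t -> continuous (fun u => - f u) t.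
Proof. intros; now apply (continuous_opp f). Qed.
Lemma c_minus (f g : R -> R) t : continuous f t -> continuous g t -> continuous (fun u => f u - g u) t.
Proof. intros; unfold Rminus; apply c_plus; auto; now apply c_opp. Qed.
Lemma c_const (c : R) (t : R) : continuous (fun _ : R => c) t.
Proof. apply continuous_const. Qed.
Lemma c_sqrt (f : R -> R) t : continuous f t -> continuous (fun u => sqrt (f u)) t.
Proof. intros; now apply continuous_sqrt_comp. Qed.
Lemma c_div (f g : R -> R) t : continuous f t -> continuous g t -> g t <> 0 -> continuous (fun u => f u / g u) t.
Proof. intros; unfold Rdiv; apply c_mult; auto; now apply continuous_Rinv_comp. Qed.
Lemma c_pow (f : R -> R) n t : continuous f t -> continuous (fun u => f u ^ n) t.
Proof. intros H; induction n; simpl. apply c_const. now apply c_mult. Qed.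

Ltac cont1 := match goal with
  | |- continuous (fun _ => ?c) _ => apply (c_const c)
  | |- continuous (fun u => @?f u + @?g u) _ => apply (c_plus f g)
  | |- continuous (fun u => @?f u - @?g u) _ => apply (c_minus f g)
  | |- continuous (fun u => @?f u * @?g u) _ => apply (c_mult f g)
  | |- continuous (fun u => @?f u / @?g u) _ => apply (c_div f g)
  | |- continuous (fun u => - @?f u) _ => apply (c_opp f)
  | |- continuous (fun u => sqrt (@?f u)) _ => apply (c_sqrt f)
  | |- continuous (fun u => (@?f u) ^ ?n) _ => apply (c_pow f n)
  | H : forall t, continuous ?f t |- continuous (fun u => ?f u) _ => apply H
  end.
Ltac cont := repeat cont1.

Lemma pos3 a b c : ~ (a = 0 /\ b = 0 /\ c = 0) -> 0 < a * a + b * b + c * c.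
Proof.
  intros H. destruct (Req_dec a 0) as [->|Ha]; [destruct (Req_dec b 0) as [->|Hb]; [destruct (Req_dec c 0) as [->|Hc]|]|].
  - exfalso; tauto.
  - assert (0 < c*c) by (apply Rsqr_pos_lt; auto). nra.
  - assert (0 < b*b) by (apply Rsqr_pos_lt; auto). nra.
  - assert (0 < a*a) by (apply Rsqr_pos_lt; auto). nra.
Qed.

Lemma Wcont j mu (x y z xp yp zp : R -> R) t :
  (forall t, continuous x t) -> (forall t, continuous y t) -> (forall t, continuous z t) ->
  (forall t, continuous xp t) -> (forall t, continuous yp t) -> (forall t, continuous zp t) ->
  (forall t, ~ (x t = - mu /\ y t = 0 /\ z t = 0)) ->
  (forall t, ~ (x t = 1 - mu /\ y t = 0 /\ z t = 0)) ->
  continuous (fun u => Jj j mu (Xstar x y z xp yp zp u)) t /\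
  continuous (fun u => Kj j mu (Xstar x y z xp yp zp u)) t.
Proof.
  intros Cx Cy Cz Cxp Cyp Czp H1 H2.
  assert (N1 : sqrt ((x t + mu) * (x t + mu) + y t * y t + z t * z t) <> 0).
  { apply Rgt_not_eq, sqrt_lt_R0, pos3. intros (A&B&C); apply (H1 t); repeat split; lra. }
  assert (N2 : sqrt ((x t - 1 + mu) * (x t - 1 + mu) + y t * y t + z t * z t) <> 0).
  { apply Rgt_not_eq, sqrt_lt_R0, pos3. intros (A&B&C); apply (H2 t); repeat split; lra. }
  unfold Jj, Kj; destruct (Nat.eqb j 2);
  unfold J2, K2, J3, K3, Pmat, norm3, dot3, add3, scal3, Rbig1, Rbigmu, e1, e2, Xstar, vx, vy, vz, v3;
  cbn [fst snd]; split; cont; try (apply pow_nonzero; assumption).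
Qed.

Lemma integrand_eq j mu (X : state) al :
  norm3 (Rbig1 mu (fst X)) <> 0 -> norm3 (Rbigmu mu (fst X)) <> 0 ->
  dot3 (hj j mu X al) (snd X) =
  Jj j mu X * cos (2 * al) + Kj j mu X * sin (2 * al)
  - (if Nat.eqb j 2 then vz (fst X) * vz (snd X) else 0).
Proof.
  destruct X as [[[r1 r2] r3] [[p1 p2] p3]].
  unfold hj, Jj, Kj; destruct (Nat.eqb j 2);
  unfold h2, h3, Mrot, J2, K2, J3, K3, Pmat, dot3, add3, scal3, e1, e2, vx, vy, vz, v3;
  cbn [fst snd]; intros N1 N2; field; repeat split; try apply pow_nonzero; auto.
Qed.


Lemma exR (F : R -> R) a b : (forall t, continuous F t) -> ex_RInt F a b.
Proof. intros H; apply (ex_RInt_continuous (V:=R_CompleteNormedModule)); intros; apply H. Qed.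

Lemma RInt_lin3 (P Q Z : R -> R) c1 c2 a b :
  ex_RInt P a b -> ex_RInt Q a b -> ex_RInt Z a b ->
  RInt (fun t => c1 * P t + c2 * Q t - Z t) a b = c1 * RInt P a b + c2 * RInt Q a b - RInt Z a b.
Proof.
  intros HP HQ HZ. apply (is_RInt_unique (V:=R_CompleteNormedModule)).
  apply (is_RInt_minus (V:=R_NormedModule) (fun t => c1 * P t + c2 * Q t) Z).
  apply (is_RInt_plus (V:=R_NormedModule) (fun t => c1 * P t) (fun t => c2 * Q t)).
  apply (is_RInt_scal (V:=R_NormedModule) P). now apply (RInt_correct (V:=R_CompleteNormedModule)).
  apply (is_RInt_scal (V:=R_NormedModule) Q). now apply (RInt_correct (V:=R_CompleteNormedModule)).
  now apply (RInt_correct (V:=R_CompleteNormedModule)).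
Qed.

Lemma RInt_lin2 (P Q : R -> R) c1 c2 a b :
  ex_RInt P a b -> ex_RInt Q a b ->
  RInt (fun t => c1 * P t + c2 * Q t) a b = c1 * RInt P a b + c2 * RInt Q a b.
Proof.
  intros HP HQ. apply (is_RInt_unique (V:=R_CompleteNormedModule)).
  apply (is_RInt_plus (V:=R_NormedModule) (fun t => c1 * P t) (fun t => c2 * Q t)).
  apply (is_RInt_scal (V:=R_NormedModule) P). now apply (RInt_correct (V:=R_CompleteNormedModule)).
  apply (is_RInt_scal (V:=R_NormedModule) Q). now apply (RInt_correct (V:=R_CompleteNormedModule)).
Qed.

Lemma shift_comp (F : R -> R) c L : (forall t, continuous F t) ->
  RInt F c (c + L) = RInt (fun u => F (u + c)) 0 L.
Proof.
  intros H.
  assert (E := RInt_comp_lin F 1 c 0 L (exR _ _ _ H)).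
  replace (1 * 0 + c) with c in E by ring. replace (1 * L + c) with (c + L) in E by ring.
  rewrite <- E. apply RInt_ext. intros u _. simpl. unfold scal; simpl. unfold mult; simpl.
  f_equal; ring_simplify. f_equal; ring.
Qed.

Lemma shift_int (F : R -> R) L c : (forall t, continuous F t) -> (forall t, F (t + L) = F t) ->
  RInt F c (c + L) = RInt F 0 L.
Proof.
  intros H HP.
  assert (E1 : RInt F c L + RInt F L (c + L) = RInt F c (c + L)) by (apply (RInt_Chasles F); apply exR; auto).
  assert (E2 : RInt F 0 c + RInt F c L = RInt F 0 L) by (apply (RInt_Chasles F); apply exR; auto).
  assert (E3 : RInt F L (c + L) = RInt F 0 c).
  { replace (c + L) with (L + c) by ring. rewrite (shift_comp F L c H).
    apply RInt_ext; intros; now rewrite HP. }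
  lra.
Qed.

Lemma reflect_int (F : R -> R) T sg : 0 < T -> (forall t, continuous F t) ->
  (forall v, 0 <= v <= T / 2 -> F (T - v) = sg * F v) ->
  RInt F 0 T = (1 + sg) * RInt F 0 (T / 2).
Proof.
  intros HT H HS.
  assert (E1 : RInt F 0 (T/2) + RInt F (T/2) T = RInt F 0 T) by (apply (RInt_Chasles F); apply exR; auto).
  assert (E := RInt_comp_lin F (-1) T (T/2) 0 (exR _ _ _ H)).
  replace (-1 * (T/2) + T) with (T/2) in E by field. replace (-1 * 0 + T) with T in E by ring.
  assert (E2 : RInt F (T/2) T = RInt (fun y => (- sg) * F y) (T/2) 0).
  { rewrite <- E. apply RInt_ext. intros v Hv. rewrite Rmin_right in Hv by lra. rewrite Rmax_left in Hv by lra.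
    unfold scal; simpl; unfold mult; simpl. replace (-1 * v + T) with (T - v) by ring.
    rewrite HS by lra. ring. }
  assert (E3 : RInt (fun y => (- sg) * F y) (T/2) 0 = (- sg) * RInt F (T/2) 0).
  { apply (RInt_scal F). apply exR; auto. }
  assert (E4 : opp (RInt F 0 (T/2)) = RInt F (T/2) 0) by (apply opp_RInt_swap; apply exR; auto).
  unfold opp in E4; simpl in E4.
  rewrite <- E1, E2, E3, <- E4. generalize (RInt F 0 (T / 2)); intros I; match goal with |- ?a = ?b => change (@eq R a b) end; ring.
Qed.

Ltac toR := match goal with |- ?a = ?b => change (@eq R a b) end.

Lemma rot_zero (Jt Kt : R -> R) T L :
  (forall t, continuous Jt t) -> (forall t, continuous Kt t) ->
  (forall t, Jt (t + T) = Jt t) -> (forall t, Kt (t + T) = Kt t) ->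
  (forall t, Jt (t + L) = Jt t) -> (forall t, Kt (t + L) = Kt t) ->
  cos (2 * L) = 1 -> sin (2 * L) = 0 -> sin T <> 0 ->
  RInt (fun t => Jt t * cos (2 * t) + Kt t * sin (2 * t)) 0 L = 0 /\
  RInt (fun t => Kt t * cos (2 * t) - Jt t * sin (2 * t)) 0 L = 0.
Proof.
  intros CJ CK PJ PK LJ LK cL sL sT.
  set (P := fun t => Jt t * cos (2 * t) + Kt t * sin (2 * t)).
  set (Q := fun t => Kt t * cos (2 * t) - Jt t * sin (2 * t)).
  assert (Ccos : forall t, continuous (fun u => cos (2 * u)) t).
  { intros t; apply (ex_derive_continuous (K:=R_AbsRing) (V:=R_NormedModule)); auto_derive; auto. }
  assert (Csin : forall t, continuous (fun u => sin (2 * u)) t).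
  { intros t; apply (ex_derive_continuous (K:=R_AbsRing) (V:=R_NormedModule)); auto_derive; auto. }
  assert (CP : forall t, continuous P t).
  { intros t; unfold P; apply (c_plus (fun u => Jt u * cos (2 * u)) (fun u => Kt u * sin (2*u)));
    apply (c_mult Jt (fun u => cos (2*u))) || apply (c_mult Kt (fun u => sin (2*u))); auto. }
  assert (CQ : forall t, continuous Q t).
  { intros t; unfold Q; apply (c_minus (fun u => Kt u * cos (2 * u)) (fun u => Jt u * sin (2*u)));
    apply (c_mult Kt (fun u => cos (2*u))) || apply (c_mult Jt (fun u => sin (2*u))); auto. }
  assert (EP : forall t, P (t + L) = P t).
  { intros t; unfold P. rewrite LJ, LK. replace (2 * (t + L)) with (2 * t + 2 * L) by ring.
    rewrite cos_plus, sin_plus, cL, sL. ring. }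
  assert (EQ : forall t, Q (t + L) = Q t).
  { intros t; unfold Q. rewrite LJ, LK. replace (2 * (t + L)) with (2 * t + 2 * L) by ring.
    rewrite cos_plus, sin_plus, cL, sL. ring. }
  set (c := cos (2 * T)). set (s := sin (2 * T)).
  assert (RP : RInt P 0 L = c * RInt P 0 L + s * RInt Q 0 L).
  { transitivity (RInt (fun u => P (u + T)) 0 L).
    { rewrite <- (shift_comp P T L CP), (shift_int P L T CP EP); reflexivity. }
    rewrite <- RInt_lin2 by (apply exR; auto). apply RInt_ext. intros u _.
    unfold P, Q, c, s. rewrite PJ, PK. replace (2 * (u + T)) with (2 * u + 2 * T) by ring.
    rewrite cos_plus, sin_plus. toR; ring. }
  assert (RQ : RInt Q 0 L = c * RInt Q 0 L + (- s) * RInt P 0 L).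
  { transitivity (RInt (fun u => Q (u + T)) 0 L).
    { rewrite <- (shift_comp Q T L CQ), (shift_int Q L T CQ EQ); reflexivity. }
    rewrite <- RInt_lin2 by (apply exR; auto). apply RInt_ext. intros u _.
    unfold P, Q, c, s. rewrite PJ, PK. replace (2 * (u + T)) with (2 * u + 2 * T) by ring.
    rewrite cos_plus, sin_plus. toR; ring. }
  assert (cs : c * c + s * s = 1) by (unfold c, s; rewrite Rplus_comm; apply sin2_cos2).
  assert (c1 : c = 1 - 2 * sin T * sin T) by (unfold c; apply cos_2a_sin).
  assert (nz : 2 - 2 * c <> 0).
  { rewrite c1. intro H. apply sT. nra. }
  revert RP RQ. generalize (RInt P 0 L) (RInt Q 0 L). intros IP IQ RP RQ.
  assert (E1 : (2 - 2 * c) * IP = 0).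
  { replace ((2 - 2*c) * IP) with ((1-c)*((1-c)*IP - s*IQ) + s*((1-c)*IQ + s*IP) + (2 - 2*c - ((1-c)*(1-c) + s*s))*IP) by ring.
    replace (2 - 2*c - ((1-c)*(1-c) + s*s)) with (1 - (c*c+s*s)) by ring. rewrite cs.
    replace ((1-c)*IP - s*IQ) with 0 by lra. replace ((1-c)*IQ + s*IP) with 0 by lra. ring. }
  assert (E2 : (2 - 2 * c) * IQ = 0).
  { replace ((2 - 2*c) * IQ) with ((1-c)*((1-c)*IQ + s*IP) - s*((1-c)*IP - s*IQ) + (2 - 2*c - ((1-c)*(1-c) + s*s))*IQ) by ring.
    replace (2 - 2*c - ((1-c)*(1-c) + s*s)) with (1 - (c*c+s*s)) by ring. rewrite cs.
    replace ((1-c)*IP - s*IQ) with 0 by lra. replace ((1-c)*IQ + s*IP) with 0 by lra. ring. }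
  split; [apply (Rmult_eq_reg_l (2 - 2*c)) | apply (Rmult_eq_reg_l (2 - 2*c))]; auto; lra.
Qed.


Definition Pdot mu x y zz (v1 v2 : R) xp yp zzp :=
  let n1 := sqrt ((x + mu) * (x + mu) + y * y + zz) in
  let nm := sqrt ((x - 1 + mu) * (x - 1 + mu) + y * y + zz) in
  ((1 - mu) / n1 ^ 3 - mu / nm ^ 3) * (v1 * xp + v2 * yp)
  - 3 / n1 ^ 5 * ((x + mu) * v1 + y * v2) * ((x + mu) * xp + y * yp + zzp)
  + 3 / nm ^ 5 * ((x - 1 + mu) * v1 + y * v2) * ((x - 1 + mu) * xp + y * yp + zzp).

Lemma Pdot_eq mu x y z v1 v2 xp yp zp :
  dot3 (Pmat mu (v3 x y z) (v3 v1 v2 0)) (v3 xp yp zp) = Pdot mu x y (z * z) v1 v2 xp yp (z * zp).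
Proof.
  unfold Pmat, Pdot, norm3, dot3, add3, scal3, Rbig1, Rbigmu, vx, vy, vz, v3; cbn [fst snd].
  unfold Rdiv. ring.
Qed.

Lemma Pdot_sym1 mu x y zz xp yp zzp :
  Pdot mu x (-y) zz 1 0 (-xp) yp (-zzp) = - Pdot mu x y zz 1 0 xp yp zzp.
Proof. unfold Pdot; cbv zeta. replace (-y * -y) with (y * y) by ring. unfold Rdiv; ring. Qed.

Lemma Pdot_sym2 mu x y zz xp yp zzp :
  Pdot mu x (-y) zz 0 1 (-xp) yp (-zzp) = Pdot mu x y zz 0 1 xp yp zzp.
Proof. unfold Pdot; cbv zeta. replace (-y * -y) with (y * y) by ring. unfold Rdiv; ring. Qed.

Lemma JK_sym j mu x1 y1 z1 xp1 yp1 zp1 x2 y2 z2 xp2 yp2 zp2 :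
  x2 = x1 -> xp2 = - xp1 -> y2 = - y1 -> yp2 = yp1 ->
  z2 * z2 = z1 * z1 -> z2 * zp2 = - (z1 * zp1) ->
  Jj j mu (v3 x2 y2 z2, v3 xp2 yp2 zp2) = - Jj j mu (v3 x1 y1 z1, v3 xp1 yp1 zp1) /\
  Kj j mu (v3 x2 y2 z2, v3 xp2 yp2 zp2) = Kj j mu (v3 x1 y1 z1, v3 xp1 yp1 zp1).
Proof.
  intros -> -> -> -> Hz Hzp.
  unfold Jj, Kj; destruct (Nat.eqb j 2); unfold J2, K2, J3, K3, e1, e2; cbn [fst snd];
  rewrite !Pdot_eq, Hz, Hzp, Pdot_sym1, Pdot_sym2; unfold vx, vy, vz, v3; cbn [fst snd]; split; ring.
Qed.


Lemma der_eq (f : R -> R) x l l' : is_derive f x l -> l = l' -> is_derive f x l'.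
Proof. now intros H <-. Qed.

Lemma der_sq (f : R -> R) x df : is_derive f x df -> is_derive (fun t => f t * f t) x (2 * f x * df).
Proof.
  intros H. eapply der_eq. apply (is_derive_mult f f x df df H H). intros; apply Rmult_comm.
  simpl. unfold plus, mult; simpl. ring.
Qed.

Lemma der_shift (f df : R -> R) c t : (forall t, is_derive f t (df t)) ->
  is_derive (fun u => f (c + u)) t (df (c + t)).
Proof.
  intros H. eapply der_eq. apply (is_derive_comp f (fun u => c + u) t (df (c + t)) 1).
  apply H. auto_derive; auto; ring. simpl; unfold scal; simpl; unfold mult; simpl; ring.
Qed.

Lemma der_refl (f df : R -> R) c t : (forall t, is_derive f t (df t)) ->
  is_derive (fun u => f (c - u)) t (- df (c - t)).
Proof.
  intros H. eapply der_eq. apply (is_derive_comp f (fun u => c - u) t (df (c - t)) (-1)).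
  apply H. auto_derive; auto; ring. simpl; unfold scal; simpl; unfold mult; simpl; ring.
Qed.

Lemma der_cont (f df : R -> R) : (forall t, is_derive f t (df t)) -> forall t, continuous f t.
Proof. intros H t. apply (ex_derive_continuous (K:=R_AbsRing) (V:=R_NormedModule)). exists (df t); apply H. Qed.

Lemma const_zero_int (F : R -> R) a b :
  (forall t, Rmin a b <= t <= Rmax a b -> is_derive F t 0) -> F b = F a.
Proof.
  intros H.
  assert (H1 := is_RInt_derive (V:=R_CompleteNormedModule) F (fun _ => 0) a b H (fun t _ => c_const 0 t)).
  assert (E1 := is_RInt_unique _ _ _ _ H1).
  rewrite (RInt_const (V:=R_CompleteNormedModule)) in E1.
  unfold minus, plus, opp, scal in E1; simpl in E1; unfold mult in E1; simpl in E1. lra.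
Qed.

Lemma zsq_sym (z zp : R -> R) s T : (forall t, is_derive z t (zp t)) ->
  (forall tau, 0 <= tau <= T / 2 -> z (s + T - tau) * zp (s + T - tau) = - (z (s + tau) * zp (s + tau))) ->
  forall tau, 0 <= tau <= T / 2 -> z (s + T - tau) * z (s + T - tau) = z (s + tau) * z (s + tau).
Proof.
  intros Hd Hs tau Ht.
  set (u := fun t => z ((s + T) - t) * z ((s + T) - t) - z (s + t) * z (s + t)).
  assert (E : u (T / 2) = u tau).
  { apply const_zero_int. intros t Htt.
    rewrite Rmin_left in Htt by lra. rewrite Rmax_right in Htt by lra.
    eapply der_eq. unfold u.
    apply (is_derive_minus (fun t => z ((s + T) - t) * z ((s + T) - t)) (fun t => z (s + t) * z (s + t))).
    apply (der_sq (fun t => z ((s+T) - t))). apply (der_refl z zp); auto.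
    apply (der_sq (fun t => z (s + t))). apply (der_shift z zp); auto.
    unfold minus, plus, opp; simpl.
    replace (s + T - t) with (s + T - t) by ring.
    assert (Hst := Hs t ltac:(lra)). nra. }
  unfold u in E. replace (s + T - T / 2) with (s + T / 2) in E by field. lra.
Qed.

Lemma zz_int (z zp : R -> R) s L : (forall t, is_derive z t (zp t)) -> (forall t, continuous zp t) ->
  z (s + L) = z s -> RInt (fun tau => z (s + tau) * zp (s + tau)) 0 L = 0.
Proof.
  intros Hd Hc Hp.
  assert (Cz := der_cont z zp Hd).
  assert (Cs : forall c t, continuous (fun u => c + u) t).
  { intros c t; apply (c_plus (fun _ => c) (fun u => u)). apply c_const. apply continuous_id. }
  assert (Cg : forall t, continuous (fun tau => z (s + tau) * zp (s + tau)) t).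
  { intros t; apply (c_mult (fun tau => z (s + tau)) (fun tau => zp (s + tau)));
    apply (continuous_comp (fun u => s + u)); auto. }
  assert (H1 := is_RInt_derive (V:=R_CompleteNormedModule) (fun tau => z (s + tau) * z (s + tau))
                  (fun tau => 2 * (z (s + tau) * zp (s + tau))) 0 L).
  assert (E := is_RInt_unique _ _ _ _ (H1 ltac:(intros t _; eapply der_eq;
      [apply (der_sq (fun u => z (s + u))); apply (der_shift z zp); auto | simpl; toR; ring])
    ltac:(intros t _; apply (c_mult (fun _ => 2) (fun tau => z (s + tau) * zp (s + tau))); [apply c_const | apply Cg]))).
  simpl in E. rewrite Hp, Rplus_0_r in E.
  assert (E2 : RInt (fun tau => 2 * (z (s + tau) * zp (s + tau))) 0 L = 2 * RInt (fun tau => z (s + tau) * zp (s + tau)) 0 L).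
  { apply (RInt_scal (V:=R_CompleteNormedModule) (fun tau => z (s + tau) * zp (s + tau))). apply exR; auto. }
  unfold minus, plus, opp in E; simpl in E. rewrite E in E2. lra.
Qed.

Lemma per_mult (F : R -> R) T : (forall t, F (t + T) = F t) -> forall n t, F (t + INR n * T) = F t.
Proof.
  intros H n; induction n; intros t. simpl. rewrite Rmult_0_l, Rplus_0_r; auto.
  rewrite S_INR. replace (t + (INR n + 1) * T) with ((t + INR n * T) + T) by ring. rewrite H; auto.
Qed.

Theorem proposition3
  (mu : R) (j : nat) (T : R) (a b : nat)
  (x y z xp yp zp : R -> R) (s : R)
  (Hmu : 0 < mu < 1)
  (Hj : j = 2%nat \/ j = 3%nat)
  (HT : 0 < T)
  (Ha : (0 < a)%nat) (Hb : (0 < b)%nat) (Hab : Nat.gcd a b = 1%nat)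
  (HaT : INR a * T = INR b * PI)
  (* r* = (x,y,z) is C^1 with derivative r*' = (xp,yp,zp) *)
  (Hdx : forall t, is_derive x t (xp t))
  (Hdy : forall t, is_derive y t (yp t))
  (Hdz : forall t, is_derive z t (zp t))
  (Hcx : forall t, continuous xp t)
  (Hcy : forall t, continuous yp t)
  (Hcz : forall t, continuous zp t)
  (* X* is T-periodic *)
  (Hpx : forall t, x (t + T) = x t) (Hpy : forall t, y (t + T) = y t)
  (Hpz : forall t, z (t + T) = z t)
  (Hpxp : forall t, xp (t + T) = xp t) (Hpyp : forall t, yp (t + T) = yp t)
  (Hpzp : forall t, zp (t + T) = zp t)
  (* r* avoids the primaries *)
  (Hav1 : forall t, ~ (x t = - mu /\ y t = 0 /\ z t = 0))
  (Hav2 : forall t, ~ (x t = 1 - mu /\ y t = 0 /\ z t = 0))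
  (* half-period symmetry at s *)
  (Hsym : forall tau, 0 <= tau <= T / 2 ->
     x (s + T - tau) = x (s + tau) /\ xp (s + T - tau) = - xp (s + tau) /\
     y (s + T - tau) = - y (s + tau) /\ yp (s + T - tau) = yp (s + tau) /\
     z (s + T - tau) * zp (s + T - tau) = - (z (s + tau) * zp (s + tau))) :
  let M := Melnikov j mu x y z xp yp zp a T in
  let B := RInt (fun tau =>
              Kj j mu (Xstar x y z xp yp zp (s + tau)) * cos (2 * tau)
              - Jj j mu (Xstar x y z xp yp zp (s + tau)) * sin (2 * tau)) 0 (T / 2) in
  (forall tau0 : R,
     M s tau0 = 2 * (if Nat.eqb a 1 then sin (2 * tau0) else 0) * B) /\
  ((1 < a)%nat -> forall s' tau0 : R, M s' tau0 = 0) /\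
  (a = 1%nat -> forall k : Z, M s (IZR k * (PI / 2)) = 0).
Proof.
  intros M B.
  assert (Cx := der_cont x xp Hdx). assert (Cy := der_cont y yp Hdy). assert (Cz := der_cont z zp Hdz).
  assert (Cs : forall c t, continuous (fun u => c + u) t).
  { intros c t; apply (c_plus (fun _ => c) (fun u => u)). apply c_const. apply continuous_id. }
  assert (Ccos : forall t, continuous (fun u => cos (2 * u)) t).
  { intros t; apply (ex_derive_continuous (K:=R_AbsRing) (V:=R_NormedModule)); auto_derive; auto. }
  assert (Csin : forall t, continuous (fun u => sin (2 * u)) t).
  { intros t; apply (ex_derive_continuous (K:=R_AbsRing) (V:=R_NormedModule)); auto_derive; auto. }
  set (Jt := fun s' tau => Jj j mu (Xstar x y z xp yp zp (s' + tau))).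
  set (Kt := fun s' tau => Kj j mu (Xstar x y z xp yp zp (s' + tau))).
  assert (CJ : forall s' t, continuous (Jt s') t /\ continuous (Kt s') t).
  { intros s' t. destruct (Wcont j mu x y z xp yp zp (s'+t) Cx Cy Cz Hcx Hcy Hcz Hav1 Hav2) as [A1 A2].
    split; unfold Jt, Kt.
    apply (continuous_comp (fun u => s' + u) (fun u => Jj j mu (Xstar x y z xp yp zp u))); auto.
    apply (continuous_comp (fun u => s' + u) (fun u => Kj j mu (Xstar x y z xp yp zp u))); auto. }
  assert (PJ : forall s' t, Jt s' (t + T) = Jt s' t /\ Kt s' (t + T) = Kt s' t).
  { intros s' t; unfold Jt, Kt. replace (s' + (t + T)) with ((s' + t) + T) by ring.
    unfold Xstar. rewrite Hpx, Hpy, Hpz, Hpxp, Hpyp, Hpzp. split; reflexivity. }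
  set (L := INR a * T).
  assert (c2L : cos (2 * L) = 1).
  { unfold L; rewrite HaT. replace (2 * (INR b * PI)) with (0 + 2 * INR b * PI) by ring.
    rewrite cos_period; apply cos_0. }
  assert (s2L : sin (2 * L) = 0).
  { unfold L; rewrite HaT. replace (2 * (INR b * PI)) with (0 + 2 * INR b * PI) by ring.
    rewrite sin_period; apply sin_0. }
  set (P := fun s' t => Jt s' t * cos (2 * t) + Kt s' t * sin (2 * t)).
  set (Q := fun s' t => Kt s' t * cos (2 * t) - Jt s' t * sin (2 * t)).
  assert (CP : forall s' t, continuous (P s') t).
  { intros s' t; destruct (CJ s' t). unfold P;
    apply (c_plus (fun u => Jt s' u * cos (2 * u)) (fun u => Kt s' u * sin (2*u)));
    apply (c_mult (Jt s') (fun u => cos (2*u))) || apply (c_mult (Kt s') (fun u => sin (2*u))); auto. }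
  assert (CQ : forall s' t, continuous (Q s') t).
  { intros s' t; destruct (CJ s' t). unfold Q;
    apply (c_minus (fun u => Kt s' u * cos (2 * u)) (fun u => Jt s' u * sin (2*u)));
    apply (c_mult (Kt s') (fun u => cos (2*u))) || apply (c_mult (Jt s') (fun u => sin (2*u))); auto. }
  assert (Mgen : forall s' tau0, M s' tau0 = cos (2 * tau0) * RInt (P s') 0 L + sin (2 * tau0) * RInt (Q s') 0 L).
  { intros s' tau0. unfold M, Melnikov. fold L.
    set (Z := fun t => if Nat.eqb j 2 then z (s' + t) * zp (s' + t) else 0).
    assert (CZ : forall t, continuous Z t).
    { intros t; unfold Z; destruct (Nat.eqb j 2). 
      apply (c_mult (fun t => z (s' + t)) (fun t => zp (s' + t)));
      apply (continuous_comp (fun u => s' + u)); auto. apply c_const. }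
    assert (RZ : RInt Z 0 L = 0).
    { unfold Z; destruct (Nat.eqb j 2).
      - apply zz_int; auto. unfold L. apply (per_mult z T Hpz).
      - rewrite (RInt_const (V:=R_CompleteNormedModule)). unfold scal; simpl; unfold mult; simpl; ring. }
    transitivity (RInt (fun t => cos (2 * tau0) * P s' t + sin (2 * tau0) * Q s' t - Z t) 0 L).
    - apply RInt_ext; intros t _.
      assert (N1 : norm3 (Rbig1 mu (fst (Xstar x y z xp yp zp (s' + t)))) <> 0).
      { unfold norm3, dot3, Rbig1, Xstar, vx, vy, vz, v3; cbn [fst snd].
        apply Rgt_not_eq, sqrt_lt_R0, pos3. intros (A&B'&C); apply (Hav1 (s'+t)); repeat split; lra. }
      assert (N2 : norm3 (Rbigmu mu (fst (Xstar x y z xp yp zp (s' + t)))) <> 0).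
      { unfold norm3, dot3, Rbigmu, Xstar, vx, vy, vz, v3; cbn [fst snd].
        apply Rgt_not_eq, sqrt_lt_R0, pos3. intros (A&B'&C); apply (Hav2 (s'+t)); repeat split; lra. }
      transitivity (Jj j mu (Xstar x y z xp yp zp (s' + t)) * cos (2 * (tau0 + t))
         + Kj j mu (Xstar x y z xp yp zp (s' + t)) * sin (2 * (tau0 + t))
         - (if Nat.eqb j 2 then z (s' + t) * zp (s' + t) else 0)).
      + exact (integrand_eq j mu (Xstar x y z xp yp zp (s' + t)) (tau0 + t) N1 N2).
      + unfold P, Q, Z, Jt, Kt. replace (2 * (tau0 + t)) with (2 * tau0 + 2 * t) by ring.
        rewrite cos_plus, sin_plus. toR; ring.
    - rewrite RInt_lin3 by (apply exR; auto). rewrite RZ. toR; ring. }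
  assert (Zero : (1 < a)%nat -> forall s' tau0, M s' tau0 = 0).
  { intros Ha1 s' tau0.
    assert (sT : sin T <> 0).
    { intros HsT. destruct (sin_eq_0_0 T HsT) as [k Hk].
      assert (Hk' : (Z.of_nat a * k = Z.of_nat b)%Z).
      { apply eq_IZR. rewrite mult_IZR, <- !INR_IZR_INZ. apply (Rmult_eq_reg_r PI); [|apply PI_neq0].
        rewrite <- HaT, Hk; ring. }
      assert (k >= 0)%Z by nia.
      assert (Eb : b = (a * Z.to_nat k)%nat) by lia.
      rewrite Eb, Nat.gcd_mul_diag_l in Hab. lia. }
    destruct (rot_zero (Jt s') (Kt s') T L) as [Z1 Z2].
    - intros t; apply CJ.
    - intros t; apply CJ.
    - intros t; apply PJ.
    - intros t; apply PJ.
    - intros t; unfold L; apply (per_mult (Jt s') T (fun t => proj1 (PJ s' t))).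
    - intros t; unfold L; apply (per_mult (Kt s') T (fun t => proj2 (PJ s' t))).
    - exact c2L.
    - exact s2L.
    - exact sT.
    - rewrite Mgen. fold (P s') in Z1. fold (Q s') in Z2. rewrite Z1, Z2. ring. }
  assert (One : a = 1%nat -> forall tau0, M s tau0 = 2 * sin (2 * tau0) * B).
  { intros Ha1 tau0. subst a.
    assert (EL : L = T) by (unfold L; simpl; ring).
    assert (HT' : T = INR b * PI) by (rewrite <- HaT; simpl; ring).
    assert (c2T : cos (2 * T) = 1) by (rewrite <- EL; exact c2L).
    assert (s2T : sin (2 * T) = 0) by (rewrite <- EL; exact s2L).
    assert (SYM : forall v, 0 <= v <= T / 2 -> Jt s (T - v) = - Jt s v /\ Kt s (T - v) = Kt s v).
    { intros v Hv. unfold Jt, Kt, Xstar. replace (s + (T - v)) with (s + T - v) by ring.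
      destruct (Hsym v Hv) as (h1&h2&h3&h4&h5).
      apply JK_sym; [exact h1|exact h2|exact h3|exact h4| |exact h5].
      apply (zsq_sym z zp s T Hdz); [|exact Hv].
      intros tau Ht. exact (proj2 (proj2 (proj2 (proj2 (Hsym tau Ht))))). }
    assert (IP : RInt (P s) 0 T = 0).
    { rewrite (reflect_int (P s) T (-1)); auto. toR; ring.
      intros v Hv. destruct (SYM v Hv) as [E1 E2]. unfold P. rewrite E1, E2.
      replace (2 * (T - v)) with (2 * T - 2 * v) by ring. rewrite cos_minus, sin_minus, c2T, s2T. ring. }
    assert (IQ : RInt (Q s) 0 T = 2 * B).
    { assert (SQ : forall v, 0 <= v <= T / 2 -> Q s (T - v) = 1 * Q s v).
      { intros v Hv. destruct (SYM v Hv) as [E1 E2]. unfold Q. rewrite E1, E2.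
        replace (2 * (T - v)) with (2 * T - 2 * v) by ring. rewrite cos_minus, sin_minus, c2T, s2T. ring. }
      rewrite (reflect_int (Q s) T 1 HT (CQ s) SQ). unfold B. toR. replace (1 + 1) with 2 by ring. reflexivity. }
    rewrite Mgen, EL, IP, IQ. toR; ring. }
  split; [|split].
  - intros tau0. destruct (Nat.eqb a 1) eqn:E.
    + apply Nat.eqb_eq in E. rewrite (One E). ring.
    + apply Nat.eqb_neq in E. rewrite (Zero ltac:(lia)). ring.
  - exact Zero.
  - intros Ha1 k. rewrite (One Ha1).
    replace (2 * (IZR k * (PI / 2))) with (IZR k * PI) by field.
    rewrite sin_eq_0_1 by (exists k; reflexivity). ring.
Qed.
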